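(* Let $I\subseteq R$ be a good ideal and let $(a_1,\dots,a_n),(b_1,\dots,b_n)\in\mathbb N^n$ with $a_i\le b_i$ for all $i$. Then $I_{a_1,\dots,a_n}\subseteq I_{b_1,\dots,b_n}$.
   Context: Let $\mathbb K$ be a field, $R=\mathbb K[x_1,\dots,x_n]$, $\mathfrak m=\langle x_1,\dots,x_n\rangle$, $\mathbb N=\{0,1,2,\dots\}$. A monomial $x_1^{\alpha_1}\cdots x_n^{\alpha_n}$ is identified with the point $(\alpha_1,\dots,\alpha_n)\in\mathbb N^n$. For a monomial ideal $I$, $G(I)$ denotes its (unique) minimal monomial generating set. If $I$ is an $\mathfrak m$-primary monomial ideal, then for each $i$ there is a unique $d_i\ge1$ with $x_i^{d_i}\in G(I)$; write $\mu_i=x_i^{d_i}$. For $(a_1,\dots,a_n)\in\mathbb N^n$ the box associated to $I$ is $B_{a_1,\dots,a_n}=([a_1d_1,(a_1+1)d_1]\times\cdots\times[a_nd_n,(a_n+1)d_n])\cap\mathbb N^n$; a monomial belongs to a box if its exponent vector does. An $\mathfrak m$-primary monomial ideal $I$ is called good if for every integer $l\ge1$, every element of $G(I^l)$ belongs to some box $B_{a_1,\dots,a_n}$ with $a_1+\dots+a_n=l-1$. For a good ideal $I$ and $a=(a_1,\dots,a_n)\in\mathbb N^n$, with $l=a_1+\dots+a_n+1$, define $I_{a_1,\dots,a_n}=\left\langle \frac{m}{\mu_1^{a_1}\cdots\mu_n^{a_n}} : m\in B_{a_1,\dots,a_n}\cap G(I^l)\right\rangle$. *)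

(* Defs.v *)
(* Monomial ideals of K[x_1..x_n] are modelled by their
   sets of monomials (exponent vectors 'I_n -> nat). *)
From mathcomp Require Import all_boot.
Set Implicit Arguments. Unset Strict Implicit. Unset Printing Implicit Defensive.

(* exponent vectors = monomials of K[x_1,...,x_n] (variable x_{i+1} <-> i : 'I_n) *)
Definition mon (n : nat) := 'I_n -> nat.

Definition mdiv n (m m' : mon n) : Prop := forall i, m i <= m' i.

Definition madd n (m m' : mon n) : mon n := fun i => m i + m' i.
Definition mone n : mon n := fun _ => 0.
Definition xpow n (i : 'I_n) (d : nat) : mon n := fun j => if j == i then d else 0.

Definition monideal n (I : mon n -> Prop) : Prop :=
  forall m m', I m -> mdiv m m' -> I m'.

Definition mingen n (I : mon n -> Prop) (m : mon n) : Prop :=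
  I m /\ forall m', I m' -> mdiv m' m -> mdiv m m'.

Fixpoint mpow n (I : mon n -> Prop) (l : nat) : mon n -> Prop :=
  match l with
  | 0 => fun _ => True
  | l'.+1 => fun m => exists a b, I a /\ mpow I l' b /\ mdiv (madd a b) m
  end.

Definition mprimary n (I : mon n -> Prop) : Prop :=
  ~ I (@mone n) /\ forall i : 'I_n, exists d, I (xpow i d).

Definition pure_exps n (I : mon n -> Prop) (d : 'I_n -> nat) : Prop :=
  forall i, 1 <= d i /\ mingen I (xpow i (d i)).

Definition inbox n (d : 'I_n -> nat) (a : 'I_n -> nat) (m : mon n) : Prop :=
  forall i, a i * d i <= m i <= (a i).+1 * d i.

Definition asum n (a : 'I_n -> nat) : nat := \sum_(i < n) a i.

Definition good n (I : mon n -> Prop) (d : 'I_n -> nat) : Prop :=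
  mprimary I /\ pure_exps I d /\
  forall l, 1 <= l -> forall m, mingen (mpow I l) m ->
    exists a : 'I_n -> nat, asum a = l.-1 /\ inbox d a m.

(* I_{a_1..a_n}: generated by m / (mu_1^{a_1} ... mu_n^{a_n}), m in B_a \cap G(I^l) *)
Definition Ia n (I : mon n -> Prop) (d : 'I_n -> nat) (a : 'I_n -> nat) : mon n -> Prop :=
  fun v => exists m, inbox d a m /\ mingen (mpow I (asum a).+1) m /\
             mdiv (fun i => m i - a i * d i) v.

(* Main.v *)
Require Import Defs.
From mathcomp Require Import all_boot.
From mathcomp Require Import zify.
From Stdlib Require Import Classical.

Set Implicit Arguments. Unset Strict Implicit. Unset Printing Implicit Defensive.

Lemma mdiv_trans n (u v w : mon n) : mdiv u v -> mdiv v w -> mdiv u w.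
Proof. move=> H1 H2 i; exact: leq_trans (H1 i) (H2 i). Qed.

Lemma mpow_mono n (I : mon n -> Prop) k (u u' : mon n) :
  mpow I k u -> mdiv u u' -> mpow I k u'.
Proof.
case: k => [//|k] /= [x [y [Hx [Hy Hd]]]] H.
exists x, y; split => //; split => //; exact: mdiv_trans Hd H.
Qed.

Lemma mpow_add n (I : mon n -> Prop) k k' (u v : mon n) :
  mpow I k u -> mpow I k' v -> mpow I (k + k') (madd u v).
Proof.
elim: k u => [|k IH] u Hu Hv.
  rewrite add0n; apply: mpow_mono Hv _ => i; rewrite /madd; apply: leq_addl.
rewrite addSn /=.
case: Hu => [x [y [Hx [Hy Hd]]]].
exists x, (madd y v); split => //; split; first exact: IH.
move=> i; move: (Hd i); rewrite /madd; lia.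
Qed.

Lemma mpow_scale n (I : mon n -> Prop) L p (w : mon n) :
  mpow I L w -> mpow I (p * L) (fun i => p * w i).
Proof.
move=> Hw; elim: p => [|p IH]; first by rewrite mul0n.
rewrite mulSn; apply: mpow_mono (mpow_add Hw IH) _ => i.
by rewrite /madd mulSn.
Qed.

Lemma sum_lt n (u u' : mon n) :
  mdiv u' u -> (exists i, u' i < u i) -> \sum_i u' i < \sum_i u i.
Proof.
move=> H [i Hi].
rewrite (bigD1 i) //= [X in _ < X](bigD1 i) //= -addSn.
apply: leq_add Hi _; apply: leq_sum => j _; exact: H.
Qed.

Lemma sum_eq_le n (c b : 'I_n -> nat) :
  \sum_i c i = \sum_i b i -> (forall k, c k <= b k) -> forall k, c k = b k.
Proof.
move=> Hs Hle k; apply/eqP; rewrite eqn_leq Hle /= leqNgt; apply/negP => Hlt.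
have := @sum_lt n b c Hle (ex_intro _ k Hlt).
by rewrite Hs ltnn.
Qed.

Lemma exists_mingen n (J : mon n -> Prop) u :
  J u -> exists v, mingen J v /\ mdiv v u.
Proof.
move: u.
suff H : forall s (u : mon n), \sum_i u i = s -> J u -> exists v, mingen J v /\ mdiv v u.
  by move=> u; apply: H.
elim/ltn_ind => s IH u Hs Hu.
case: (classic (mingen J u)) => [Hm|Hm].
  by exists u; split => // i.
have [m' [Jm' [Hdiv Hnd]]] : exists m', J m' /\ mdiv m' u /\ ~ mdiv u m'.
  apply: NNPP => Hno; apply: Hm; split => // m' Jm' Hd.
  apply: NNPP => Hn; apply: Hno; exists m'; tauto.
have [i Hi] : exists i, m' i < u i.
  apply: NNPP => Hno; apply: Hnd => i; rewrite leqNgt; apply/negP => Hlt.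
  apply: Hno; exists i; exact: Hlt.
have Hlt := @sum_lt n u m' Hdiv (ex_intro _ i Hi).
rewrite Hs in Hlt.
have [v [Hv Hvd]] := IH _ Hlt m' erefl Jm'.
exists v; split => //; exact: mdiv_trans Hvd Hdiv.
Qed.

Lemma mpow_pure n (I : mon n -> Prop) d (hd : pure_exps I d) s :
  forall e : 'I_n -> nat, asum e = s -> mpow I s (fun i => e i * d i).
Proof.
elim: s => [|s IH] e He //=.
have [i Hi] : exists i, 0 < e i.
  case/boolP: [exists i, 0 < e i] => [/existsP //|/existsP Hno].
  exfalso; move: He; rewrite /asum big1 // => t _.
  apply/eqP; rewrite -leqn0 leqNgt; apply/negP => H; apply: Hno; exists t; exact: H.
pose e' := fun t => if t == i then (e i).-1 else e t.
have He' : asum e' = s.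
  have Hr : \sum_(t < n | t != i) e' t = \sum_(t < n | t != i) e t.
    by apply: eq_bigr => t /negbTE; rewrite /e' => ->.
  move: He; rewrite /asum (bigD1 i) //= [X in _ -> X = _](bigD1 i) //= Hr /e' eqxx.
  move: Hi; case: (e i) => // k _ /=; rewrite addSn => -[] <-; done.
exists (xpow i (d i)), (fun t => e' t * d t); split; first by case: (hd i) => _ [].
split; first exact: IH.
move=> t; rewrite /madd /xpow /e'.
case Hti: (t == i); last by rewrite add0n.
move/eqP: Hti => ->; move: Hi; case: (e i) => // k _ /=; by rewrite mulSn.
Qed.

Lemma nu_tight n (I : mon n -> Prop) d (hg : good I d) L (w : mon n)
  (e : 'I_n -> nat) : 1 <= L -> asum e = L -> mpow I L w ->
  (forall i, w i <= e i * d i) -> forall i, w i = e i * d i.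
Proof.
move=> HL He Hw Hle i; apply/eqP; rewrite eqn_leq Hle /= leqNgt; apply/negP => Hlt.
have [hprim [hpe hbox]] := hg.
have d1 : forall t, 1 <= d t by move=> t; case: (hpe t).
pose p := 2 * d i.
have Hpw := mpow_scale p Hw.
have [v [Hv Hvd]] := exists_mingen Hpw.
have HpL : 1 <= p * L by have := d1 i; rewrite /p; nia.
have [c [Hc Hcb]] := hbox (p * L) HpL v Hv.
have Hct : forall t, c t * d t <= p * w t.
  move=> t; have /andP [H1 _] := Hcb t; exact: leq_trans H1 (Hvd t).
have Hck : forall t, c t <= p * e t.
  move=> t; rewrite -(leq_pmul2r (d1 t)); apply: leq_trans (Hct t) _.
  by rewrite -mulnA leq_mul2l Hle orbT.
have Hci : c i + 2 <= p * e i.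
  have := Hct i; have := d1 i; move: Hlt; rewrite /p.
  move: (c i) (d i) (e i) (w i) => C D E W; nia.
have Hsum : asum c + 2 <= p * L.
  rewrite -He /asum big_distrr /= (bigD1 i) //= [X in _ <= X](bigD1 i) //=.
  rewrite addnAC; apply: leq_add Hci _; apply: leq_sum => t _; exact: Hck t.
move: Hc Hsum HpL; lia.
Qed.

Lemma asum_add1 n (a : 'I_n -> nat) k :
  asum (fun t => a t + (t == k)) = (asum a).+1.
Proof.
rewrite /asum big_split /=.
have -> : \sum_(i < n) (i == k : nat) = 1.
  rewrite (bigD1 k) //= eqxx big1 ?addn0 //.
  by move=> t /negbTE ->.
by rewrite addn1.
Qed.

Theorem mainTheorem5 (n : nat) (I : mon n -> Prop) (d : 'I_n -> nat)
  (hI : monideal I) (hd : pure_exps I d) (hgood : good I d)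
  (a b : 'I_n -> nat) (hab : forall i, a i <= b i) :
  forall v : mon n, Ia I d a v -> Ia I d b v.
Proof.
move=> v [m [Hma [Hmg Hmv]]].
have d1 : forall t, 1 <= d t by move=> t; case: (hd t).
have [hprim [hpe hbox]] := hgood.
pose m' := fun i => m i + (b i - a i) * d i.
have Hsum : asum b = asum a + asum (fun i => b i - a i).
  by rewrite /asum -big_split; apply: eq_bigr => i _ /=; rewrite subnKC.
have Hm' : mpow I (asum b).+1 m'.
  have := mpow_add (proj1 Hmg) (mpow_pure hd (erefl (asum (fun i => b i - a i)))).
  by rewrite Hsum addSn.
have [w [Hw Hwm]] := exists_mingen Hm'.
have [c [Hc Hcw]] := hbox _ (ltn0Sn _) w Hw.
rewrite /= in Hc.
have key : forall t, w t <= m t + (b t * d t - a t * d t) /\ a t * d t <= b t * d t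
    /\ a t * d t <= m t /\ m t <= d t + a t * d t.
  move=> t; have := Hwm t; rewrite /m' mulnBl => H; split => //.
  split; first by rewrite leq_mul2r hab orbT.
  by have /andP [H1 H2] := Hma t; rewrite mulSn in H2.
have Hwb : forall t, b t * d t <= w t.
  case/boolP: [exists k, b k < c k] => [/existsP [k Hk]|/existsP Hno].
  - have Hmk : m k = d k + a k * d k.
      have /andP [H1 _] := Hcw k.
      have H4 : (b k).+1 * d k <= c k * d k by rewrite leq_mul2r Hk orbT.
      rewrite mulSn in H4.
      have [K1 [K2 [K3 K4]]] := key k.
      move: H1 H4 K1 K2 K3 K4.
      move: (m k) (w k) (a k * d k) (b k * d k) (c k * d k) (d k) => M W A B C D.
      lia.
    have Hle1 : mdiv (fun t => (a t + (t == k)) * d t) m.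
      move=> t; case Htk: (t == k).
        by move/eqP: Htk => ->; rewrite Hmk addn1 mulSn.
      by rewrite addn0; have [_ [_ [K3 _]]] := key t.
    have Hmle := (proj2 Hmg) _ (mpow_pure hd (asum_add1 a k)) Hle1.
    have Hle2 : forall t, w t <= (b t + (t == k)) * d t.
      move=> t; have := Hmle t; have [K1 [K2 _]] := key t.
      rewrite mulnDl mulnDl.
      move: K1 K2 ((t == k) * d t) => K1 K2 X.
      move: (m t) (w t) (a t * d t) (b t * d t) K1 K2 => M W A B; lia.
    move=> t.
    have := nu_tight hgood (ltn0Sn _) (asum_add1 b k) (proj1 Hw) Hle2 t.
    move=> ->; rewrite leq_mul2r leq_addr orbT //.
  - have Hle : forall k, c k <= b k.
      move=> k; rewrite leqNgt; apply/negP => H; apply: Hno; exists k; exact: H.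
    have Heq := sum_eq_le Hc Hle.
    move=> t; rewrite -Heq; by have /andP [H1 _] := Hcw t.
exists w; split; last split => //.
- move=> t; rewrite Hwb /= mulSn.
  have [K1 [K2 [K3 K4]]] := key t.
  move: K1 K2 K3 K4; move: (m t) (w t) (a t * d t) (b t * d t) (d t) => M W A B D; lia.
- move=> t /=; apply: leq_trans _ (Hmv t) => /=.
  have [K1 [K2 [K3 K4]]] := key t.
  move: K1 K2 K3 K4; move: (m t) (w t) (a t * d t) (b t * d t) (d t) => M W A B D; lia.
Qed.
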